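(* Fix $m\ge1$, $\omega\in\mathbb Z\setminus\{0\}$, and set $\kappa=2\pi\omega$. For every $\delta\in(0,1)$ there exist $\varepsilon_R=\varepsilon_R(m,\omega,\delta)>0$ and $C_{\delta,m,\omega}<\infty$ such that every smooth closed immersed planar curve $\gamma$ of length $1$, turning number $\omega$ and $E_m[\gamma]\le\varepsilon_R$ satisfies $$\int_\gamma R^2\,ds\le\delta\,\mathcal P+C_{\delta,m,\omega}E_m[\gamma]^2,$$ where $\mathcal P=\int_\gamma k_{s^{2m+2}}^2ds$ and $$R:=\mathcal K_m-(-1)^{m+1}\big(k_{s^{2m+2}}+\kappa^2k_{s^{2m}}\big)=(-1)^{m+1}(k^2-\kappa^2)k_{s^{2m}}-\sum_{j=1}^{m-1}(-1)^jk\,k_{s^{m-j}}k_{s^{m+j}}-\tfrac12k\,k_{s^m}^2.$$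
   Context: $s$ arclength, $k$ signed curvature, $k_{s^j}$ its $j$-th arclength derivative, $E_m[\gamma]=\frac12\int_\gamma k_{s^m}^2ds$, $\mathcal K_m=(-1)^{m+1}k_{s^{2m+2}}-\tfrac12 k\,k_{s^m}^2+k\sum_{r=1}^m(-1)^{r+1}k_{s^{m-r}}k_{s^{m+r}}$; turning number $\frac1{2\pi}\int k\,ds$. *)

(* Defs.v *)
From Stdlib Require Import Reals.
From Coquelicot Require Import Coquelicot.
Open Scope R_scope.

Definition smooth (f : R -> R) : Prop :=
  forall (n : nat) (s : R), ex_derive (Derive_n f n) s.

(* A smooth closed immersed planar curve of length 1, given by its
   arclength parametrization gamma = (gx, gy) : R -> R^2, 1-periodic,
   with unit speed. *)
Definition closed_unit_length_curve (gx gy : R -> R) : Prop :=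
  smooth gx /\ smooth gy /\
  (forall s, gx (s + 1) = gx s /\ gy (s + 1) = gy s) /\
  (forall s, (Derive gx s)^2 + (Derive gy s)^2 = 1).

Definition curv (gx gy : R -> R) (s : R) : R :=
  Derive gx s * Derive_n gy 2 s - Derive gy s * Derive_n gx 2 s.

Definition ks (gx gy : R -> R) (j : nat) (s : R) : R :=
  Derive_n (curv gx gy) j s.

Definition Em (m : nat) (gx gy : R -> R) : R :=
  / 2 * RInt (fun s => (ks gx gy m s)^2) 0 1.

Definition turning_number (gx gy : R -> R) : R :=
  / (2 * PI) * RInt (curv gx gy) 0 1.

Definition Km (m : nat) (gx gy : R -> R) (s : R) : R :=
  (-1)^(m+1) * ks gx gy (2*m+2) s
  - / 2 * curv gx gy s * (ks gx gy m s)^2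
  + curv gx gy s *
      sum_f 1 m (fun r => (-1)^(r+1) * ks gx gy (m - r) s * ks gx gy (m + r) s).

Definition Rrem (m : nat) (kappa : R) (gx gy : R -> R) (s : R) : R :=
  Km m gx gy s - (-1)^(m+1) * (ks gx gy (2*m+2) s + kappa^2 * ks gx gy (2*m) s).

Definition Pm (m : nat) (gx gy : R -> R) : R :=
  RInt (fun s => (ks gx gy (2*m+2) s)^2) 0 1.

(* Main.v *)
Require Import Defs.
From Stdlib Require Import Reals ZArith Lra Lia.
From Coquelicot Require Import Coquelicot.
Open Scope R_scope.

Definition nsm (n : nat) (f : R -> R) : Prop :=
  forall k, (k <= n)%nat -> forall x, ex_derive (Derive_n f k) x.

Lemma smooth_nsm f : smooth f -> forall n, nsm n f.
Proof. intros H n k _ x; apply H. Qed.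

Lemma Dn_plus n f g : nsm n f -> nsm n g -> forall k, (k <= S n)%nat -> forall x,
  Derive_n (fun y => f y + g y) k x = Derive_n f k x + Derive_n g k x.
Proof.
  intros Hf Hg k; induction k as [|k IH]; intros Hk x; [reflexivity|].
  simpl. rewrite (Derive_ext _ (fun y => Derive_n f k y + Derive_n g k y)).
  - apply (Derive_plus (Derive_n f k) (Derive_n g k)); [apply Hf|apply Hg]; lia.
  - intro t; apply IH; lia.
Qed.

Lemma nsm_plus n f g : nsm n f -> nsm n g -> nsm n (fun y => f y + g y).
Proof.
  intros Hf Hg k Hk x.
  apply (ex_derive_ext (fun y => Derive_n f k y + Derive_n g k y)).
  - intro t; symmetry; apply (Dn_plus n); auto.
  - apply (ex_derive_plus (Derive_n f k) (Derive_n g k)); [apply Hf|apply Hg]; lia.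
Qed.

Lemma smooth_D f : smooth f -> smooth (Derive f).
Proof.
  intros H n x. apply (ex_derive_ext (Derive_n f (n+1))).
  - intro t. rewrite <- (Derive_n_comp f n 1). reflexivity.
  - apply H.
Qed.

Lemma smooth_Dn f j : smooth f -> smooth (Derive_n f j).
Proof.
  intros H n x. apply (ex_derive_ext (Derive_n f (n+j))).
  - intro t. rewrite <- (Derive_n_comp f n j). reflexivity.
  - apply H.
Qed.

Lemma smooth_mult_aux n : forall f g, smooth f -> smooth g -> nsm n (fun y => f y * g y).
Proof.
  induction n as [|n IH]; intros f g Hf Hg k Hk x.
  - assert (k = 0%nat) by lia; subst k. simpl.
    apply ex_derive_mult; [apply (Hf 0%nat) | apply (Hg 0%nat)].
  - destruct k as [|k].
    + simpl. apply ex_derive_mult; [apply (Hf 0%nat) | apply (Hg 0%nat)].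
    + assert (E : forall t, Derive_n (fun y => Derive f y * g y + f y * Derive g y) k t
                  = Derive_n (fun y => f y * g y) (S k) t).
      { intro t. transitivity (Derive_n (Derive_n (fun y => f y * g y) 1) k t);
        [|rewrite Derive_n_comp; f_equal; lia]. apply Derive_n_ext. intro z. simpl.
        rewrite Derive_mult; [reflexivity| apply (Hf 0%nat) | apply (Hg 0%nat)]. }
      apply (ex_derive_ext _ _ _ E).
      apply (nsm_plus n); [apply IH| apply IH| lia]; auto using smooth_D.
Qed.

Lemma smooth_mult f g : smooth f -> smooth g -> smooth (fun y => f y * g y).
Proof. intros Hf Hg n x. apply (smooth_mult_aux n f g Hf Hg n (le_n n)). Qed.

Lemma smooth_plus f g : smooth f -> smooth g -> smooth (fun y => f y + g y).
Proof. intros Hf Hg n x. apply (nsm_plus n); auto using smooth_nsm. Qed.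

Lemma smooth_opp f : smooth f -> smooth (fun y => - f y).
Proof.
  intros Hf n x. apply (ex_derive_ext (fun y => - Derive_n f n y)).
  - intro t; symmetry; apply Derive_n_opp.
  - apply (ex_derive_opp (Derive_n f n)). apply Hf.
Qed.

Lemma smooth_ext f g : (forall x, f x = g x) -> smooth f -> smooth g.
Proof.
  intros E Hf n x. apply (ex_derive_ext (Derive_n f n)).
  - intro t; apply Derive_n_ext; auto.
  - apply Hf.
Qed.

Lemma smooth_curv gx gy : smooth gx -> smooth gy -> smooth (curv gx gy).
Proof.
  intros Hx Hy. unfold curv.
  apply (smooth_ext (fun s => Derive gx s * Derive_n gy 2 s + - (Derive gy s * Derive_n gx 2 s))).
  - intro; ring.
  - apply smooth_plus; [|apply smooth_opp]; apply smooth_mult;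
      auto using smooth_D, smooth_Dn.
Qed.

Lemma Derive_per f : (forall s, f (s+1) = f s) -> forall s, Derive f (s+1) = Derive f s.
Proof.
  intros H s. unfold Derive. f_equal. apply Lim_ext. intro h.
  replace (s + 1 + h) with ((s + h) + 1) by ring. rewrite !H. reflexivity.
Qed.

Lemma Dn_per f : (forall s, f (s+1) = f s) -> forall n s, Derive_n f n (s+1) = Derive_n f n s.
Proof.
  intros H n; induction n as [|n IH]; intro s; simpl; auto.
  apply Derive_per; auto.
Qed.
Definition C0 (f : R -> R) : Prop := forall x, continuous f x.

Lemma C0_plus f g : C0 f -> C0 g -> C0 (fun x => f x + g x).
Proof. intros Hf Hg x. exact (continuous_plus f g x (Hf x) (Hg x)). Qed.
Lemma C0_mult f g : C0 f -> C0 g -> C0 (fun x => f x * g x).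
Proof. intros Hf Hg x. exact (continuous_mult f g x (Hf x) (Hg x)). Qed.
Lemma C0_opp f : C0 f -> C0 (fun x => - f x).
Proof. intros Hf x. exact (continuous_opp f x (Hf x)). Qed.
Lemma C0_const c : C0 (fun _ => c).
Proof. intros x. apply continuous_const. Qed.
Lemma C0_minus f g : C0 f -> C0 g -> C0 (fun x => f x - g x).
Proof. intros Hf Hg. apply C0_plus; auto using C0_opp. Qed.
Lemma C0_sq f : C0 f -> C0 (fun x => f x ^ 2).
Proof. intros Hf x. apply (continuous_ext (fun x => f x * f x) (fun x => f x ^ 2)); [intro y; change (f y * f y = f y ^ 2); ring|].
  apply C0_mult; auto. Qed.
Lemma C0_ext f g : (forall x, f x = g x) -> C0 f -> C0 g.
Proof. intros E Hf x. apply (continuous_ext f g); auto. Qed.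
Lemma C0_exRInt f a b : C0 f -> ex_RInt f a b.
Proof. intros H. apply (@ex_RInt_continuous R_CompleteNormedModule). intros; apply H. Qed.
Lemma C0_deriv f : (forall x, ex_derive f x) -> C0 f.
Proof. intros H x. apply (@ex_derive_continuous R_AbsRing R_NormedModule), H. Qed.

Ltac c0 := repeat match goal with
  | |- C0 (fun _ => ?c) => apply (C0_const c)
  | |- C0 (fun s => @?f s + @?g s) => apply (C0_plus f g)
  | |- C0 (fun s => @?f s - @?g s) => apply (C0_minus f g)
  | |- C0 (fun s => @?f s * @?g s) => apply (C0_mult f g)
  | |- C0 (fun s => - @?f s) => apply (C0_opp f)
  | |- C0 (fun s => @?f s ^ 2) => apply (C0_sq f)
  | |- C0 _ => assumption
  end.

Lemma RInt_extR (f g : R -> R) a b : (forall x, f x = g x) -> RInt f a b = RInt g a b.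
Proof. intros; apply RInt_ext; auto. Qed.
Lemma RInt_plusR f g a b : C0 f -> C0 g ->
  RInt (fun x => f x + g x) a b = RInt f a b + RInt g a b.
Proof. intros; exact (@RInt_plus R_CompleteNormedModule f g a b (C0_exRInt f a b H) (C0_exRInt g a b H0)). Qed.
Lemma RInt_scalR f c a b : C0 f -> RInt (fun x => c * f x) a b = c * RInt f a b.
Proof. intros; exact (@RInt_scal R_CompleteNormedModule f a b c (C0_exRInt f a b H)). Qed.
Lemma RInt_leR f g a b : a <= b -> C0 f -> C0 g -> (forall x, a <= x <= b -> f x <= g x) ->
  RInt f a b <= RInt g a b.
Proof. intros; apply RInt_le; auto using C0_exRInt. intros; apply H2; lra. Qed.
Lemma RInt_ge0R f a b : a <= b -> C0 f -> (forall x, a <= x <= b -> 0 <= f x) -> 0 <= RInt f a b.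
Proof. intros; apply RInt_ge_0; auto using C0_exRInt. intros; apply H1; lra. Qed.
Lemma RInt_constR c a b : RInt (fun _ => c) a b = (b - a) * c.
Proof. rewrite RInt_const. reflexivity. Qed.
Lemma RInt_ChaslesR f a b c : C0 f -> RInt f a b + RInt f b c = RInt f a c.
Proof. intros; exact (@RInt_Chasles R_CompleteNormedModule f a b c (C0_exRInt f a b H) (C0_exRInt f b c H)). Qed.
Lemma RInt_swapR f a b : C0 f -> RInt f b a = - RInt f a b.
Proof. intros. rewrite <- (@opp_RInt_swap R_CompleteNormedModule f a b (C0_exRInt f a b H)). reflexivity. Qed.

Lemma RInt_sub01 h a b : C0 h -> (forall x, 0 <= x <= 1 -> 0 <= h x) -> 0 <= a <= b -> b <= 1 ->
  RInt h a b <= RInt h 0 1.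
Proof.
  intros Hc Hp Ha Hb.
  rewrite <- (RInt_ChaslesR h 0 a 1 Hc), <- (RInt_ChaslesR h a b 1 Hc).
  assert (0 <= RInt h 0 a) by (apply RInt_ge0R; [lra|exact Hc|intros; apply Hp; lra]).
  assert (0 <= RInt h b 1) by (apply RInt_ge0R; [lra|exact Hc|intros; apply Hp; lra]).
  lra.
Qed.

Lemma isd_mult (f g : R -> R) x a b : is_derive f x a -> is_derive g x b ->
  is_derive (fun y => f y * g y) x (a * g x + f x * b).
Proof.
  intros Ha Hb. pose proof (@is_derive_mult R_AbsRing f g x a b Ha Hb) as H.
  apply H. intros; apply Rmult_comm.
Qed.

Lemma isd_sq (f : R -> R) x a : is_derive f x a -> is_derive (fun y => f y ^ 2) x (2 * f x * a).
Proof.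
  intros Ha. pose proof (isd_mult f f x a a Ha Ha) as H.
  apply (is_derive_ext (fun y => f y * f y)). { intro t; change (f t * f t = f t ^ 2); ring. }
  replace (2 * f x * a) with (a * f x + f x * a) by ring. exact H.
Qed.

Lemma amgm t a b : 0 < t -> 2 * a * b <= t * a ^ 2 + / t * b ^ 2.
Proof.
  intros Ht. set (u := / t). assert (Hu : t * u = 1) by (unfold u; field; lra).
  assert (0 < u) by (unfold u; apply Rinv_0_lt_compat; lra).
  assert (0 <= u * (t * a - b) ^ 2) by (apply Rmult_le_pos; [lra| apply pow2_ge_0]).
  replace (u * (t * a - b) ^ 2) with (t * a ^ 2 * (t * u) - 2 * a * b * (t * u) + u * b ^ 2) in H0 by ring.
  rewrite Hu in H0. lra.
Qed.

Definition N (f : R -> R) : R := RInt (fun x => f x ^ 2) 0 1.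

Lemma N_ge0 f : C0 f -> 0 <= N f.
Proof. intros; apply RInt_ge0R; [lra| c0 | intros; apply pow2_ge_0]. Qed.

Lemma FTC_sq (v w : R -> R) : (forall x, is_derive v x (w x)) -> C0 v -> C0 w ->
  forall a b, v b ^ 2 - v a ^ 2 = RInt (fun x => 2 * v x * w x) a b.
Proof.
  intros Hd Hv Hw a b.
  assert (Hd2 : forall x, is_derive (fun y => v y ^ 2) x (2 * v x * w x)) by (intros; apply isd_sq; auto).
  rewrite <- (RInt_Derive (fun y => v y ^ 2) a b).
  - apply RInt_ext. intros x _. apply is_derive_unique; auto.
  - intros x _. eexists; apply Hd2.
  - intros x _. apply (continuous_ext (fun x => 2 * v x * w x)).
    + intro t; symmetry; apply is_derive_unique; auto.
    + apply C0_mult; [apply C0_mult|]; c0.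
Qed.

Lemma zero_of (F v : R -> R) : F 0 = F 1 -> (forall x, is_derive F x (v x)) -> exists c, 0 <= c <= 1 /\ v c = 0.
Proof.
  intros HF Hd. destruct (MVT_gen F 0 1 v) as [c [Hc E]].
  - intros; auto.
  - intros x _. apply continuity_pt_filterlim.
    apply (@ex_derive_continuous R_AbsRing R_NormedModule). eexists; apply Hd.
  - rewrite Rmin_left, Rmax_right in Hc by lra. exists c; split; auto.
    rewrite HF in E. nra.
Qed.

Lemma sup_bound (v w : R -> R) c : (forall x, is_derive v x (w x)) -> C0 v -> C0 w ->
  0 <= c <= 1 -> v c = 0 -> forall t s, 0 < t -> 0 <= s <= 1 ->
  v s ^ 2 <= t * N v + / t * N w.
Proof.
  intros Hd Hv Hw Hc Hz t s Ht Hs.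
  set (h := fun x => t * v x ^ 2 + / t * w x ^ 2).
  assert (Hh : C0 h) by (unfold h; c0).
  assert (Hh0 : forall x, 0 <= h x).
  { intro x; unfold h. pose proof (amgm t (v x) (w x) Ht). pose proof (amgm t (- v x) (w x) Ht).
    nra. }
  assert (HI : RInt h 0 1 = t * N v + / t * N w).
  { unfold h, N. rewrite RInt_plusR by c0. rewrite !RInt_scalR by c0. reflexivity. }
  rewrite <- HI.
  pose proof (FTC_sq v w Hd Hv Hw c s) as E. rewrite Hz in E.
  replace (v s ^ 2) with (RInt (fun x => 2 * v x * w x) c s) by (rewrite <- E; change (v s ^ 2 - 0 ^ 2 = v s ^ 2); ring).
  assert (Hg : C0 (fun x => 2 * v x * w x)) by (apply C0_mult; [apply C0_mult|]; c0).
  destruct (Rle_lt_dec c s).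
  - apply Rle_trans with (RInt h c s).
    + apply RInt_leR; auto. intros x _. apply (amgm t (v x) (w x) Ht).
    + apply RInt_sub01; auto. lra. lra.
  - rewrite RInt_swapR by auto.
    assert (E2 := RInt_scalR (fun x => 2 * v x * w x) (-1) s c Hg).
    apply Rle_trans with (RInt (fun x => -1 * (2 * v x * w x)) s c); [rewrite E2; lra|].
    apply Rle_trans with (RInt h s c).
    + apply RInt_leR; [lra| apply C0_mult; c0 | auto |]. intros x _.
      pose proof (amgm t (- v x) (w x) Ht). unfold h. nra.
    + apply RInt_sub01; auto. lra. lra.
Qed.

Lemma poincare (v w : R -> R) c : (forall x, is_derive v x (w x)) -> C0 v -> C0 w ->
  0 <= c <= 1 -> v c = 0 ->
  N v <= 4 * N w /\ forall s, 0 <= s <= 1 -> v s ^ 2 <= 4 * N w.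
Proof.
  intros Hd Hv Hw Hc Hz.
  assert (Hb := sup_bound v w c Hd Hv Hw Hc Hz (/2)).
  assert (H1 : N v <= / 2 * N v + / / 2 * N w).
  { unfold N at 1. apply Rle_trans with (RInt (fun _ => / 2 * N v + / / 2 * N w) 0 1).
    - apply RInt_leR; [lra| c0 | apply C0_const|]. intros; apply Hb; lra.
    - rewrite RInt_constR; lra. }
  rewrite Rinv_inv in H1. split; [lra|].
  intros s Hs. pose proof (Hb s ltac:(lra) Hs). rewrite Rinv_inv in H. lra.
Qed.

Lemma IBP (v w z : R -> R) : (forall x, is_derive v x (w x)) -> (forall x, is_derive w x (z x)) ->
  C0 v -> C0 w -> C0 z -> v 1 * w 1 = v 0 * w 0 ->
  forall t, 0 < t -> 2 * N w <= t * N z + / t * N v.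
Proof.
  intros Hv Hw Cv Cw Cz Hp t Ht.
  assert (Hd : forall x, is_derive (fun y => v y * w y) x (w x * w x + v x * z x))
    by (intros; apply isd_mult; auto).
  assert (E : RInt (fun x => w x * w x + v x * z x) 0 1 = 0).
  { rewrite <- (RInt_ext (Derive (fun y => v y * w y))).
    - rewrite RInt_Derive; [lra| |].
      + intros x _; eexists; apply Hd.
      + intros x _. apply (continuous_ext (fun x => w x * w x + v x * z x)).
        * intro; symmetry; apply is_derive_unique; auto.
        * apply (C0_plus (fun x => w x * w x) (fun x => v x * z x)); c0.
    - intros; apply is_derive_unique; auto. }
  rewrite RInt_plusR in E by c0.
  assert (E2 : 2 * N w = RInt (fun x => 2 * (- v x) * z x) 0 1).
  { unfold N. replace (RInt (fun x => 2 * (- v x) * z x) 0 1) with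
      (RInt (fun x => (-2) * (v x * z x)) 0 1) by (apply RInt_extR; intros; ring).
    rewrite RInt_scalR by c0.
    replace (RInt (fun x => w x ^ 2) 0 1) with (RInt (fun x => w x * w x) 0 1)
      by (apply RInt_extR; intros; ring). lra. }
  rewrite E2. unfold N. rewrite <- !RInt_scalR by c0. rewrite <- RInt_plusR by c0.
  apply RInt_leR; [lra| c0 | c0 |]. intros x _.
  pose proof (amgm t (z x) (- v x) Ht). nra.
Qed.
Definition HypA (a : nat -> R) : Prop :=
  (forall j, 0 <= a j) /\ (forall j t, 0 < t -> 2 * a (S j) <= t * a (S (S j)) + / t * a j).

Lemma ehr1 m d : forall eta, 0 < eta -> exists C, 0 <= C /\ forall a, HypA a ->
  a (m + d)%nat <= eta * a (S (m + d)) + C * a m.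
Proof.
  induction d as [|d IH]; intros eta Heta.
  - exists 1. split; [lra|]. intros a [Ha _]. rewrite Nat.add_0_r.
    pose proof (Ha (S m)). nra.
  - destruct (IH eta Heta) as [C [HC HI]]. exists (C / eta). split.
    { apply Rmult_le_pos; auto. left; apply Rinv_0_lt_compat; auto. }
    intros a Ha. specialize (HI a Ha). destruct Ha as [Hp Hi].
    replace (m + S d)%nat with (S (m + d)) by lia.
    pose proof (Hi (m + d)%nat eta Heta) as H2.
    assert (H3 : / eta * a (m + d)%nat <= / eta * (eta * a (S (m + d)) + C * a m)).
    { apply Rmult_le_compat_l; auto. left; apply Rinv_0_lt_compat; auto. }
    replace (/ eta * (eta * a (S (m + d)) + C * a m)) with (a (S (m + d)) + C / eta * a m) in H3
      by (field; lra).
    lra.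
Qed.

Lemma ehr2 m n : (1 <= n)%nat -> forall d eta, 0 < eta -> exists C, 0 <= C /\ forall a, HypA a ->
  forall i, (i <= d)%nat -> a (m + (n - 1 - i))%nat <= eta * a (m + n)%nat + C * a m.
Proof.
  intros Hn d. induction d as [|d IH]; intros eta Heta.
  - destruct (ehr1 m (n - 1) eta Heta) as [C [HC HI]]. exists C; split; auto.
    intros a Ha i Hi. assert (i = 0%nat) by lia; subst i.
    replace (m + n)%nat with (S (m + (n - 1 - 0))) by lia.
    replace (n - 1 - 0)%nat with (n - 1)%nat by lia. apply HI; auto.
  - destruct (IH eta Heta) as [C [HC HI]].
    destruct (ehr1 m (n - 1 - S d) 1 ltac:(lra)) as [C1 [HC1 HI1]].
    exists (C + C1). split; [lra|]. intros a Ha i Hi.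
    pose proof (proj1 Ha m) as Ham.
    destruct (Nat.le_gt_cases i d) as [Hid|Hid].
    + specialize (HI a Ha i Hid). nra.
    + assert (i = S d) by lia; subst i.
      destruct (Nat.le_gt_cases (S d) (n - 1)) as [Hc|Hc].
      * specialize (HI1 a Ha). specialize (HI a Ha d (le_n d)).
        replace (S (m + (n - 1 - S d))) with (m + (n - 1 - d))%nat in HI1 by lia.
        nra.
      * replace (n - 1 - S d)%nat with (n - 1 - d)%nat by lia.
        specialize (HI a Ha d (le_n d)). nra.
Qed.

Lemma ehr3 m : forall eta, 0 < eta -> exists C, 0 <= C /\ forall a, HypA a ->
  forall j, (m <= j <= 2 * m + 1)%nat -> a j <= eta * a (2 * m + 2)%nat + C * a m.
Proof.
  intros eta Heta.
  destruct (ehr2 m (m + 2) ltac:(lia) (m + 1) eta Heta) as [C [HC HI]].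
  exists C; split; auto. intros a Ha j Hj.
  specialize (HI a Ha (2 * m + 1 - j)%nat ltac:(lia)).
  replace (m + (m + 2 - 1 - (2 * m + 1 - j)))%nat with j in HI by lia.
  replace (m + (m + 2))%nat with (2 * m + 2)%nat in HI by lia. exact HI.
Qed.

Lemma low_bound (a : nat -> R) m : (forall j, 0 <= a j) -> (forall j, a j <= 4 * a (S j)) ->
  forall i, (i <= m)%nat -> a i <= 4 ^ m * a m.
Proof.
  intros Hp H4.
  assert (G : forall d i, (i + d = m)%nat -> a i <= 4 ^ d * a m).
  { induction d as [|d IH]; intros i Hi.
    - rewrite Nat.add_0_r in Hi; subst; simpl; lra.
    - specialize (IH (S i) ltac:(lia)). specialize (H4 i). simpl. nra. }
  intros i Hi. apply Rle_trans with (4 ^ (m - i) * a m).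
  - apply G; lia.
  - apply Rmult_le_compat_r; auto. apply Rle_pow; [lra| lia].
Qed.

Definition u (k : R -> R) (ka : R) (j : nat) : R -> R :=
  match j with O => fun s => k s - ka | S _ => Derive_n k j end.

Lemma u_deriv k ka : smooth k -> forall j x, is_derive (u k ka j) x (u k ka (S j) x).
Proof.
  intros Hk j x. destruct j as [|j].
  - simpl. pose proof (Derive_correct k x (Hk 0%nat x)) as H.
    pose proof (@is_derive_minus R_AbsRing R_NormedModule k (fun _ => ka) x _ _ H (is_derive_const ka x)) as H2.
    change (is_derive (fun s => minus (k s) ka) x (Derive k x)).
    replace (Derive k x) with (minus (Derive k x) zero) by (apply minus_zero_r).
    exact H2.
  - simpl. apply (Derive_correct (Derive_n k (S j)) x). apply Hk.
Qed.

Lemma u_C0 k ka j : smooth k -> C0 (u k ka j).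
Proof. intros Hk. apply C0_deriv. intro x. eexists. apply u_deriv; auto. Qed.

Lemma u_per k ka j : (forall s, k (s + 1) = k s) -> forall s, u k ka j (s + 1) = u k ka j s.
Proof.
  intros Hp s. destruct j as [|j]; simpl.
  - rewrite Hp; auto.
  - apply Derive_per. intro; apply Dn_per; auto.
Qed.

Lemma u_zero k ka j : smooth k -> (forall s, k (s + 1) = k s) -> RInt k 0 1 = ka ->
  exists c, 0 <= c <= 1 /\ u k ka j c = 0.
Proof.
  intros Hk Hp Hi. destruct j as [|j].
  - apply (zero_of (fun s => RInt k 0 s - ka * s)).
    + cbv beta. rewrite (@RInt_point R_CompleteNormedModule 0 k). rewrite Hi. change (zero - ka * 0 = ka - ka * 1). unfold zero; simpl; ring.
    + intro x. simpl.
      assert (H1 : is_derive (RInt k 0) x (k x)).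
      { apply (is_derive_RInt k (RInt k 0) 0 x).
        - apply filter_forall. intro b. apply (@RInt_correct R_CompleteNormedModule).
          apply C0_exRInt. apply C0_deriv; intro y; apply (Hk 0%nat).
        - apply (@ex_derive_continuous R_AbsRing R_NormedModule), (Hk 0%nat). }
      assert (H2 : is_derive (fun s => ka * s) x ka) by (auto_derive; [trivial| ring]).
      pose proof (@is_derive_minus R_AbsRing R_NormedModule _ _ x _ _ H1 H2) as H3.
      exact H3.
  - apply (zero_of (u k ka j)).
    + rewrite <- (u_per k ka j Hp 0). f_equal; ring.
    + apply u_deriv; auto.
Qed.

Fixpoint sumlt (g : nat -> R) (p : nat) : R :=
  match p with O => 0 | S q => sumlt g q + g q end.

Lemma sum_f_R0_lt g p : sum_f_R0 g p = sumlt g p + g p.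
Proof. induction p as [|p IH]; simpl; [ring|]. rewrite IH. ring. Qed.

Lemma sumlt_nonneg g p : (forall x, (x < p)%nat -> 0 <= g x) -> 0 <= sumlt g p.
Proof. induction p as [|p IH]; intros H; simpl; [lra|].
  pose proof (H p (Nat.lt_succ_diag_r p)). assert (0 <= sumlt g p) by (apply IH; intros; apply H; lia). lra. Qed.

Lemma sumlt_le f g p : (forall x, (x < p)%nat -> f x <= g x) -> sumlt f p <= sumlt g p.
Proof. induction p as [|p IH]; intros H; simpl; [lra|].
  pose proof (H p (Nat.lt_succ_diag_r p)). assert (sumlt f p <= sumlt g p) by (apply IH; intros; apply H; lia). lra. Qed.

Lemma sumlt_scal c g p : sumlt (fun x => c * g x) p = c * sumlt g p.
Proof. induction p as [|p IH]; simpl; [ring|]. rewrite IH; ring. Qed.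

Lemma sumlt_bound g p B : (forall x, (x < p)%nat -> g x <= B) -> sumlt g p <= INR p * B.
Proof. induction p as [|p IH]; intros H; cbn [sumlt]; [simpl; lra|].
  pose proof (H p (Nat.lt_succ_diag_r p)). assert (sumlt g p <= INR p * B) by (apply IH; intros; apply H; lia).
  rewrite S_INR. lra. Qed.

Lemma sumlt_sq g p : (sumlt g p) ^ 2 <= 2 ^ p * sumlt (fun x => g x ^ 2) p.
Proof.
  induction p as [|p IH]; cbn [sumlt]; [simpl; lra|].
  change (2 ^ S p) with (2 * 2 ^ p).
  assert (H0 : 0 <= sumlt (fun x => g x ^ 2) p) by (apply sumlt_nonneg; intros; apply pow2_ge_0).
  assert (H1 : 1 <= 2 ^ p) by (apply pow_R1_Rle; lra).
  pose proof (pow2_ge_0 (g p)).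
  assert (A1 : (sumlt g p + g p)^2 <= 2 * sumlt g p ^2 + 2 * g p ^2)
    by (pose proof (pow2_ge_0 (sumlt g p - g p)); nra).
  assert (A2 : g p ^ 2 <= 2 ^ p * g p ^ 2) by nra.
  nra.
Qed.

Lemma C0_sumlt (F : nat -> R -> R) p : (forall x, C0 (F x)) -> C0 (fun s => sumlt (fun x => F x s) p).
Proof. intros H. induction p as [|p IH]; simpl; [apply C0_const|]. apply C0_plus; auto. Qed.

Lemma RInt_sumlt (F : nat -> R -> R) p : (forall x, C0 (F x)) ->
  RInt (fun s => sumlt (fun x => F x s) p) 0 1 = sumlt (fun x => RInt (F x) 0 1) p.
Proof.
  intros H. induction p as [|p IH]; simpl.
  - rewrite RInt_constR. ring.
  - rewrite RInt_plusR; [rewrite IH; reflexivity| apply C0_sumlt; auto| auto].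
Qed.

Lemma Dn_C0 k j : smooth k -> C0 (Derive_n k j).
Proof. intros Hk. apply C0_deriv. intro; apply Hk. Qed.
Lemma k_C0 k : smooth k -> C0 k.
Proof. intros Hk. apply C0_deriv. intro; apply (Hk 0%nat). Qed.

Ltac c0k := repeat match goal with
  | |- C0 (fun _ => ?c) => apply (C0_const c)
  | |- C0 (fun s => @?f s + @?g s) => apply (C0_plus f g)
  | |- C0 (fun s => @?f s - @?g s) => apply (C0_minus f g)
  | |- C0 (fun s => @?f s * @?g s) => apply (C0_mult f g)
  | |- C0 (fun s => - @?f s) => apply (C0_opp f)
  | |- C0 (fun s => @?f s ^ 2) => apply (C0_sq f)
  | |- C0 (fun s => sumlt (fun x => @?F x s) _) => apply (C0_sumlt F); intro
  | |- C0 (fun s => Derive_n ?k _ s) => apply Dn_C0; assumption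
  | |- C0 (Derive_n ?k _) => apply Dn_C0; assumption
  | |- C0 _ => first [assumption | (apply k_C0; assumption)]
  end.

Definition Rk (m : nat) (ka : R) (k : R -> R) (s : R) : R :=
  ((-1)^(m+1) * Derive_n k (2*m+2) s
   - / 2 * k s * (Derive_n k m s)^2
   + k s * sum_f 1 m (fun r => (-1)^(r+1) * Derive_n k (m - r) s * Derive_n k (m + r) s))
  - (-1)^(m+1) * (Derive_n k (2*m+2) s + ka^2 * Derive_n k (2*m) s).

Lemma Rrem_Rk m ka gx gy s : Rrem m ka gx gy s = Rk m ka (curv gx gy) s.
Proof. reflexivity. Qed.

Lemma Rk_expr p ka k s : Rk (S p) ka k s =
  (-1)^(S p + 1) * ((k s - ka) * (k s - ka + 2 * ka) * Derive_n k (2 * S p) s)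
  + k s * sumlt (fun x => (-1)^(x + 1 + 1) * Derive_n k (S p - (x + 1)) s * Derive_n k (S p + (x + 1)) s) p
  - / 2 * k s * (Derive_n k (S p) s) ^ 2.
Proof.
  unfold Rk, sum_f. replace (S p - 1)%nat with p by lia. rewrite sum_f_R0_lt. cbv beta.
  replace (S p - (p + 1))%nat with 0%nat by lia.
  replace (S p + (p + 1))%nat with (2 * S p)%nat by lia.
  replace (p + 1 + 1)%nat with (S p + 1)%nat by lia.
  change (Derive_n k 0 s) with (k s). ring.
Qed.

Lemma u_pos k ka j : (1 <= j)%nat -> forall s, u k ka j s = Derive_n k j s.
Proof. intros H s. destruct j; [lia|reflexivity]. Qed.

Lemma neg1_sq n : ((-1) ^ n) ^ 2 = 1.
Proof. rewrite <- pow_mult, Nat.mul_comm, pow_mult. replace ((-1)^2) with 1 by ring. apply pow1. Qed.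

Lemma le_mul3 a a' b b' c : 0 <= a <= a' -> 0 <= b <= b' -> 0 <= c -> a * b * c <= a' * b' * c.
Proof. intros. apply Rmult_le_compat_r; auto. apply Rmult_le_compat; lra. Qed.

Lemma main_k m (ka : R) delta : (1 <= m)%nat -> 0 < delta -> exists C, 0 <= C /\
  forall k, smooth k -> (forall s, k (s + 1) = k s) -> RInt k 0 1 = ka ->
  N (Derive_n k m) <= 1 ->
  RInt (fun s => Rk m ka k s ^ 2) 0 1 <= delta * N (Derive_n k (2 * m + 2)) + C * N (Derive_n k m) ^ 2.
Proof.
  intros Hm Hd. destruct m as [|p]; [lia|].
  set (L := 4 ^ (S p)).
  assert (HL : 1 <= L) by (apply pow_R1_Rle; lra).
  set (K := 8 * L + 2 * ka ^ 2). set (K2 := 8 * L + 8 * ka ^ 2).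
  assert (HK : 0 < K) by (unfold K; pose proof (pow2_ge_0 ka); lra).
  assert (HK2 : 0 < K2) by (unfold K2; pose proof (pow2_ge_0 ka); lra).
  assert (Hp2 : 1 <= 2 ^ p) by (apply pow_R1_Rle; lra).
  assert (HINR : 0 <= INR p) by apply pos_INR.
  set (M := 4 * L * K2 + K * 2 ^ p * 4 * L * INR p + K).
  assert (HM : 0 < M).
  { unfold M. assert (0 <= K * 2 ^ p * 4 * L * INR p).
    { apply Rmult_le_pos; [|lra]; apply Rmult_le_pos; [|lra]; apply Rmult_le_pos; [|lra]; apply Rmult_le_pos; lra. } assert (0 < 4 * L * K2) by (apply Rmult_lt_0_compat; lra). lra. }
  set (eta := delta / (3 * M)).
  assert (Heta : 0 < eta) by (unfold eta; apply Rdiv_lt_0_compat; lra).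
  destruct (ehr3 (S p) eta Heta) as [C [HC HE]].
  exists (3 * M * C). split; [nra|].
  intros k Hk Hper Hint HNm.
  set (a := fun j => N (u k ka j)).
  assert (HA : HypA a).
  { split.
    - intro j; unfold a; apply N_ge0, u_C0; auto.
    - intros j t Ht. unfold a.
      apply (IBP (u k ka j) (u k ka (S j)) (u k ka (S (S j)))); auto using u_deriv, u_C0.
      assert (E1 := u_per k ka j Hper 0); assert (E2 := u_per k ka (S j) Hper 0).
      rewrite Rplus_0_l in E1, E2. rewrite E1, E2; reflexivity. }
  assert (Hpo : forall j, a j <= 4 * a (S j) /\ forall s, 0 <= s <= 1 -> u k ka j s ^ 2 <= 4 * a (S j)).
  { intro j. destruct (u_zero k ka j Hk Hper Hint) as [c [Hc Hz]].
    apply (poincare (u k ka j) (u k ka (S j)) c); auto using u_deriv, u_C0. }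
  assert (Hlow : forall i, (i <= S p)%nat -> a i <= L * a (S p)).
  { apply low_bound; [apply HA| intro j; apply Hpo]. }
  set (Nm := a (S p)).
  assert (HNm0 : 0 <= Nm) by apply HA.
  change (N (Derive_n k (S p))) with Nm in HNm |- *.
  set (P := a (2 * S p + 2)%nat).
  change (N (Derive_n k (2 * S p + 2))) with P.
  assert (HP0 : 0 <= P) by apply HA.
  assert (HEj : forall j, (S p <= j <= 2 * S p + 1)%nat -> a j <= eta * P + C * Nm)
    by (intros; apply HE; auto).
  set (A0 := 4 * L * Nm).
  assert (HA0 : 0 <= A0 <= 4 * L) by (unfold A0; nra).
  assert (Hsup : forall i s, (i < S p)%nat -> 0 <= s <= 1 -> u k ka i s ^ 2 <= A0).
  { intros i s Hi Hs. apply Rle_trans with (4 * a (S i)); [apply Hpo; auto|].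
    unfold A0. specialize (Hlow (S i) Hi). fold Nm in Hlow. lra. }
  set (G := fun s => (3 * A0 * K2) * Derive_n k (2 * S p) s ^ 2
     + ((3 * K * 2 ^ p * A0) * sumlt (fun x => Derive_n k (S p + (x + 1)) s ^ 2) p
     + (3 * / 4 * K * (4 * a (S (S p)))) * Derive_n k (S p) s ^ 2)).
  assert (HG : forall s, 0 <= s <= 1 -> Rk (S p) ka k s ^ 2 <= G s).
  { intros s Hs. rewrite Rk_expr.
    assert (Hu0 : (k s - ka) ^ 2 <= A0) by (apply (Hsup 0%nat s); auto; lia).
    assert (Hks : k s ^ 2 <= K).
    { unfold K. pose proof (pow2_ge_0 (k s - ka - ka)). nra. }
    assert (Hk2 : (k s - ka + 2 * ka) ^ 2 <= K2).
    { unfold K2. pose proof (pow2_ge_0 (k s - ka - 2 * ka)). nra. }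
    set (X := (-1) ^ (S p + 1) * ((k s - ka) * (k s - ka + 2 * ka) * Derive_n k (2 * S p) s)).
    set (Sm := sumlt (fun x => (-1) ^ (x + 1 + 1) * Derive_n k (S p - (x + 1)) s * Derive_n k (S p + (x + 1)) s) p).
    set (Z := / 2 * k s * Derive_n k (S p) s ^ 2).
    assert (H3 : (X + k s * Sm - Z) ^ 2 <= 3 * (X ^ 2 + (k s * Sm) ^ 2 + Z ^ 2)).
    { pose proof (pow2_ge_0 (X - k s * Sm)). pose proof (pow2_ge_0 (X + Z)).
      pose proof (pow2_ge_0 (k s * Sm + Z)). nra. }
    assert (HX : X ^ 2 <= A0 * K2 * Derive_n k (2 * S p) s ^ 2).
    { unfold X. rewrite !Rpow_mult_distr, neg1_sq, Rmult_1_l.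
      apply le_mul3; [split; [apply pow2_ge_0|auto] | split; [apply pow2_ge_0|auto] | apply pow2_ge_0]. }
    assert (HS : Sm ^ 2 <= 2 ^ p * (A0 * sumlt (fun x => Derive_n k (S p + (x + 1)) s ^ 2) p)).
    { unfold Sm. eapply Rle_trans; [apply sumlt_sq|]. apply Rmult_le_compat_l; [lra|].
      rewrite <- sumlt_scal. apply sumlt_le. intros x Hx.
      rewrite !Rpow_mult_distr, neg1_sq, Rmult_1_l.
      apply Rmult_le_compat_r; [apply pow2_ge_0|].
      rewrite <- (u_pos k ka (S p - (x + 1))) by lia. apply Hsup; auto; lia. }
    assert (HY : (k s * Sm) ^ 2 <= K * (2 ^ p * (A0 * sumlt (fun x => Derive_n k (S p + (x + 1)) s ^ 2) p))).
    { rewrite Rpow_mult_distr. apply Rmult_le_compat; auto using pow2_ge_0. }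
    assert (HZ : Z ^ 2 <= / 4 * K * (4 * a (S (S p))) * Derive_n k (S p) s ^ 2).
    { unfold Z. replace ((/ 2 * k s * Derive_n k (S p) s ^ 2) ^ 2) with
        (/ 4 * k s ^ 2 * Derive_n k (S p) s ^ 2 * Derive_n k (S p) s ^ 2) by field.
      apply Rmult_le_compat_r; [apply pow2_ge_0|].
      assert (Hm2 : Derive_n k (S p) s ^ 2 <= 4 * a (S (S p))) by (apply (Hpo (S p)); auto).
      apply Rmult_le_compat; [| apply pow2_ge_0 | | auto].
      - apply Rmult_le_pos; [lra| apply pow2_ge_0].
      - apply Rmult_le_compat_l; lra. }
    unfold G. nra. }
  assert (HCR : C0 (fun s => Rk (S p) ka k s ^ 2)).
  { apply C0_sq. apply (C0_ext (fun s => (-1)^(S p + 1) * ((k s - ka) * (k s - ka + 2 * ka) * Derive_n k (2 * S p) s)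
  + k s * sumlt (fun x => (-1)^(x + 1 + 1) * Derive_n k (S p - (x + 1)) s * Derive_n k (S p + (x + 1)) s) p
  - / 2 * k s * (Derive_n k (S p) s) ^ 2)); [intro; symmetry; apply Rk_expr|]. c0k. }
  assert (HCG : C0 G) by (unfold G; c0k).
  apply Rle_trans with (RInt G 0 1); [apply RInt_leR; auto; lra|].
  assert (HIG : RInt G 0 1 = 3 * A0 * K2 * a (2 * S p)%nat
     + (3 * K * 2 ^ p * A0 * sumlt (fun x => a (S p + (x + 1))%nat) p
     + 3 * / 4 * K * (4 * a (S (S p))) * Nm)).
  { unfold G. rewrite RInt_plusR by c0k. rewrite RInt_plusR by c0k.
    rewrite !RInt_scalR by c0k.
    rewrite (RInt_sumlt (fun x s => Derive_n k (S p + (x + 1)) s ^ 2)) by (intro; c0k).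
    reflexivity. }
  rewrite HIG.
  set (Q := eta * P + C * Nm).
  assert (HQ : 0 <= Q) by (unfold Q; apply Rplus_le_le_0_compat; apply Rmult_le_pos; lra).
  assert (B1 : a (2 * S p)%nat <= Q) by (apply HEj; lia).
  assert (B2 : sumlt (fun x => a (S p + (x + 1))%nat) p <= INR p * Q)
    by (apply sumlt_bound; intros; apply HEj; lia).
  assert (B3 : a (S (S p)) <= Q) by (apply HEj; lia).
  assert (T1 : A0 * K2 * a (2 * S p)%nat <= A0 * K2 * Q)
    by (apply Rmult_le_compat_l; auto; apply Rmult_le_pos; lra).
  assert (T2 : K * 2 ^ p * A0 * sumlt (fun x => a (S p + (x + 1))%nat) p <= K * 2 ^ p * A0 * (INR p * Q)).
  { apply Rmult_le_compat_l; auto. apply Rmult_le_pos; [|lra]. apply Rmult_le_pos; lra. }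
  assert (T3 : K * a (S (S p)) * Nm <= K * Q * Nm).
  { apply Rmult_le_compat_r; auto. apply Rmult_le_compat_l; lra. }
  assert (E1 : 3 * (A0 * K2 * Q + K * 2 ^ p * A0 * (INR p * Q) + K * Q * Nm) = 3 * M * eta * (Nm * P) + 3 * M * C * Nm ^ 2)
    by (unfold A0, M, Q; ring).
  assert (E2 : 3 * M * eta = delta) by (unfold eta; field; lra).
  rewrite E2 in E1.
  assert (T4 : delta * (Nm * P) <= delta * P) by (apply Rmult_le_compat_l; [lra|]; rewrite <- (Rmult_1_l P) at 2; apply Rmult_le_compat_r; lra).
  replace (3 * / 4 * K * (4 * a (S (S p))) * Nm) with (3 * (K * a (S (S p)) * Nm)) by field.
  lra.
Qed.

Theorem mainTheorem8 :
  forall (m : nat) (omega : Z),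
    (1 <= m)%nat -> omega <> 0%Z ->
    let kappa := 2 * PI * IZR omega in
    forall delta : R, 0 < delta < 1 ->
    exists epsR C : R, 0 < epsR /\
      forall gx gy : R -> R,
        closed_unit_length_curve gx gy ->
        turning_number gx gy = IZR omega ->
        Em m gx gy <= epsR ->
        RInt (fun s => (Rrem m kappa gx gy s)^2) 0 1
          <= delta * Pm m gx gy + C * (Em m gx gy)^2.
Proof.
  intros m omega Hm Hom kappa delta Hd.
  destruct (main_k m kappa delta Hm ltac:(lra)) as [C [HC HM]].
  exists (/ 2), (4 * C). split; [lra|].
  intros gx gy [Hx [Hy [Hper _]]] Htn HE.
  assert (Hk := smooth_curv gx gy Hx Hy).
  assert (Hp : forall s, curv gx gy (s + 1) = curv gx gy s).
  { intro s. unfold curv.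
    assert (Px : forall s, gx (s + 1) = gx s) by (intro; apply Hper).
    assert (Py : forall s, gy (s + 1) = gy s) by (intro; apply Hper).
    rewrite (Derive_per gx Px), (Derive_per gy Py), (Dn_per gx Px), (Dn_per gy Py). reflexivity. }
  assert (Hi : RInt (curv gx gy) 0 1 = kappa).
  { unfold turning_number in Htn. unfold kappa. rewrite <- Htn.
    pose proof PI_RGT_0.
    assert (E : forall I : R, I = 2 * PI * (/ (2 * PI) * I)) by (intro; field; lra). apply E. }
  assert (HEm : Em m gx gy = / 2 * N (Derive_n (curv gx gy) m)) by reflexivity.
  assert (HN : N (Derive_n (curv gx gy) m) <= 1) by lra.
  specialize (HM (curv gx gy) Hk Hp Hi HN).
  change (RInt (fun s => Rk m kappa (curv gx gy) s ^ 2) 0 1 <=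
     delta * N (Derive_n (curv gx gy) (2 * m + 2)) + 4 * C * Em m gx gy ^ 2).
  rewrite HEm.
  replace (4 * C * (/ 2 * N (Derive_n (curv gx gy) m)) ^ 2) with (C * N (Derive_n (curv gx gy) m) ^ 2) by field.
  exact HM.
Qed.
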